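(* Every T-stationary point $(\bar x,\bar y)$ of the relaxation (R), regarded as an MPOC, is degenerate, i.e. at least one of the nondegeneracy conditions ND1–ND4 fails at $(\bar x,\bar y)$.
   Context: Let $f\in C^2(\mathbb{R}^n,\mathbb{R})$ and $s\in\{0,1,\dots,n-1\}$. Relaxation (R): minimize $f(x)$ over $(x,y)\in\mathbb{R}^{2n}$ s.t. $\sum_{i=1}^n y_i\ge n-s$, $y_i\le 1$, $x_iy_i=0$, $y_i\ge0$, $i=1,\dots,n$. This is an MPOC (in variables $z=(x,y)$) with no equality constraints, inequality constraints $g_0(z)=\sum_i y_i-(n-s)\ge0$ and $g_i(z)=1-y_i\ge0$, and orthogonality type constraints $F_{1,i}(z)F_{2,i}(z)=0$, $F_{2,i}(z)\ge0$ with $F_{1,i}(z)=x_i$, $F_{2,i}(z)=y_i$, $i=1,\dots,n$. General MPOC definitions (for $\min f$ s.t. $h_i=0$, $g_j\ge0$, $F_{1,m}F_{2,m}=0$, $F_{2,m}\ge0$): at a feasible $\bar z$, $J_0=\{j\mid g_j(\bar z)=0\}$, $a_{00}=\{m\mid F_{1,m}(\bar z)=0=F_{2,m}(\bar z)\}$, $a_{01}=\{m\mid F_{1,m}(\bar z)=0,F_{2,m}(\bar z)>0\}$, $a_{10}=\{m\mid F_{1,m}(\bar z)\ne0,F_{2,m}(\bar z)=0\}$. LICQ: $Dh_i$, $Dg_j$ ($j\in J_0$), $DF_{1,m}$ ($m\in a_{01}\cup a_{00}$), $DF_{2,m}$ ($m\in a_{10}\cup a_{00}$) at $\bar z$ linearly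 independent. T-stationary: there exist multipliers $\bar\lambda_i,\bar\mu_j$ ($j\in J_0$), $\bar\sigma_{1,m}$ ($a_{01}$), $\bar\sigma_{2,m}$ ($a_{10}$), $\bar\varrho_{1,m},\bar\varrho_{2,m}$ ($a_{00}$) with $Df=\sum\bar\lambda_iDh_i+\sum_{J_0}\bar\mu_jDg_j+\sum_{a_{01}}\bar\sigma_{1,m}DF_{1,m}+\sum_{a_{10}}\bar\sigma_{2,m}DF_{2,m}+\sum_{a_{00}}(\bar\varrho_{1,m}DF_{1,m}+\bar\varrho_{2,m}DF_{2,m})$ at $\bar z$, $\bar\mu_j\ge0$, and $\bar\varrho_{1,m}=0$ or $\bar\varrho_{2,m}\le0$ for $m\in a_{00}$. Lagrangian $L=f-\sum\bar\lambda_ih_i-\sum_{J_0}\bar\mu_jg_j-\sum_{a_{01}}\bar\sigma_{1,m}F_{1,m}-\sum_{a_{10}}\bar\sigma_{2,m}F_{2,m}-\sum_{a_{00}}(\bar\varrho_{1,m}F_{1,m}+\bar\varrho_{2,m}F_{2,m})$; tangent space $T=\{\xi\mid Dh_i(\bar z)\xi=0,\ Dg_j(\bar z)\xi=0\ (j\in J_0),\ DF_{1,m}(\bar z)\xi=0\ (m\in a_{01}\cup a_{00}),\ DF_{2,m}(\bar z)\xi=0\ (m\in a_{10}\cup a_{00})\}$. Nondegeneracy of a T-stationary point: ND1 LICQ holds; ND2 $\bar\mu_j>0$ for all $j\in J_0$; ND3 $\bar\varrho_{1,m}\ne0$ and $\bar\varrho_{2,m}<0$ for all $m\in a_{00}$;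 ND4 $D^2L(\bar z)$ restricted to $T$ is nonsingular. A T-stationary point is degenerate if it is not nondegenerate. *)

(* Defs.v *)
From HB Require Import structures.
From mathcomp Require Import all_boot all_order all_algebra.
From mathcomp Require Import all_classical all_reals all_analysis.
Set Implicit Arguments. Unset Strict Implicit. Unset Printing Implicit Defensive.
Import Order.TTheory GRing.Theory Num.Theory.
Import numFieldNormedType.Exports.
Local Open Scope ring_scope.

Section MPOC.
Variable R : realType.

Definition evec (N : nat) (j : 'I_N) : 'rV[R]_N := delta_mx 0 j.

Definition partial (N : nat) (j : 'I_N) (phi : 'rV[R]_N -> R) (z : 'rV[R]_N) : R :=
  derive phi z (evec j).

Definition grad (N : nat) (phi : 'rV[R]_N -> R) (z : 'rV[R]_N) : 'rV[R]_N :=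
  \row_j partial j phi z.
Definition hess (N : nat) (phi : 'rV[R]_N -> R) (z : 'rV[R]_N) : 'M[R]_N :=
  \matrix_(i, j) partial j (partial i phi) z.

Definition dotv (N : nat) (u v : 'rV[R]_N) : R := \sum_k u 0 k * v 0 k.

Definition C2 (N : nat) (phi : 'rV[R]_N -> R) : Prop :=
  continuous phi /\
  (forall (i : 'I_N) z, derivable phi z (evec i)) /\
  (forall i : 'I_N, continuous (partial i phi)) /\
  (forall (i j : 'I_N) z, derivable (partial i phi) z (evec j)) /\
  (forall i j : 'I_N, continuous (partial j (partial i phi))).

(** A general MPOC on R^N:  min obj  s.t. h_i = 0 (i<p), g_j >= 0 (j<q),
    F1_m * F2_m = 0, F2_m >= 0 (m<k). *)
Record mpoc (N : nat) := MPOC {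
  np : nat; nq : nat; nk : nat;
  obj : 'rV[R]_N -> R;
  hc : 'I_np -> 'rV[R]_N -> R;
  gc : 'I_nq -> 'rV[R]_N -> R;
  F1 : 'I_nk -> 'rV[R]_N -> R;
  F2 : 'I_nk -> 'rV[R]_N -> R }.
Arguments np {N} m.
Arguments nq {N} m.
Arguments nk {N} m.
Arguments obj {N} m _.
Arguments hc {N} m _ _.
Arguments gc {N} m _ _.
Arguments F1 {N} m _ _.
Arguments F2 {N} m _ _.

Variable N : nat.
Variable P : mpoc N.

Definition feasible (z : 'rV[R]_N) : Prop :=
  (forall i, hc P i z = 0) /\ (forall j, 0 <= gc P j z) /\
  (forall m, F1 P m z * F2 P m z = 0 /\ 0 <= F2 P m z).

Definition J0 (z : 'rV[R]_N) (j : 'I_(nq P)) : bool := gc P j z == 0.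
Definition a00 (z : 'rV[R]_N) (m : 'I_(nk P)) : bool :=
  (F1 P m z == 0) && (F2 P m z == 0).
Definition a01 (z : 'rV[R]_N) (m : 'I_(nk P)) : bool :=
  (F1 P m z == 0) && (0 < F2 P m z).
Definition a10 (z : 'rV[R]_N) (m : 'I_(nk P)) : bool :=
  (F1 P m z != 0) && (F2 P m z == 0).

Definition LICQ (z : 'rV[R]_N) : Prop :=
  forall (a : 'I_(np P) -> R) (b : 'I_(nq P) -> R) (c d : 'I_(nk P) -> R),
    \sum_i a i *: grad (hc P i) z
    + \sum_(j | J0 z j) b j *: grad (gc P j) z
    + \sum_(m | a01 z m || a00 z m) c m *: grad (F1 P m) z
    + \sum_(m | a10 z m || a00 z m) d m *: grad (F2 P m) z = 0 ->
    (forall i, a i = 0) /\ (forall j, J0 z j -> b j = 0) /\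
    (forall m, a01 z m || a00 z m -> c m = 0) /\
    (forall m, a10 z m || a00 z m -> d m = 0).

(** Multipliers (only the values on the relevant index sets matter). *)
Record mult := Mult {
  lam : 'I_(np P) -> R;
  mu : 'I_(nq P) -> R;
  sig1 : 'I_(nk P) -> R;
  sig2 : 'I_(nk P) -> R;
  rho1 : 'I_(nk P) -> R;
  rho2 : 'I_(nk P) -> R }.

Definition Tstat_with (z : 'rV[R]_N) (M : mult) : Prop :=
  feasible z /\
  grad (obj P) z =
    \sum_i lam M i *: grad (hc P i) z
    + \sum_(j | J0 z j) mu M j *: grad (gc P j) z
    + \sum_(m | a01 z m) sig1 M m *: grad (F1 P m) z
    + \sum_(m | a10 z m) sig2 M m *: grad (F2 P m) z
    + \sum_(m | a00 z m) (rho1 M m *: grad (F1 P m) z + rho2 M m *: grad (F2 P m) z) /\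
  (forall j, J0 z j -> 0 <= mu M j) /\
  (forall m, a00 z m -> rho1 M m = 0 \/ rho2 M m <= 0).

Definition T_stationary (z : 'rV[R]_N) : Prop := exists M, Tstat_with z M.

Definition Lagrangian (zbar : 'rV[R]_N) (M : mult) (w : 'rV[R]_N) : R :=
  obj P w
  - \sum_i lam M i * hc P i w
  - \sum_(j | J0 zbar j) mu M j * gc P j w
  - \sum_(m | a01 zbar m) sig1 M m * F1 P m w
  - \sum_(m | a10 zbar m) sig2 M m * F2 P m w
  - \sum_(m | a00 zbar m) (rho1 M m * F1 P m w + rho2 M m * F2 P m w).

Definition tangent (zbar : 'rV[R]_N) (xi : 'rV[R]_N) : Prop :=
  (forall i, dotv (grad (hc P i) zbar) xi = 0) /\
  (forall j, J0 zbar j -> dotv (grad (gc P j) zbar) xi = 0) /\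
  (forall m, a01 zbar m || a00 zbar m -> dotv (grad (F1 P m) zbar) xi = 0) /\
  (forall m, a10 zbar m || a00 zbar m -> dotv (grad (F2 P m) zbar) xi = 0).

Definition ND1 (z : 'rV[R]_N) : Prop := LICQ z.
Definition ND2 (z : 'rV[R]_N) (M : mult) : Prop := forall j, J0 z j -> 0 < mu M j.
Definition ND3 (z : 'rV[R]_N) (M : mult) : Prop :=
  forall m, a00 z m -> rho1 M m != 0 /\ rho2 M m < 0.
Definition ND4 (z : 'rV[R]_N) (M : mult) : Prop :=
  forall xi, tangent z xi ->
    (forall eta, tangent z eta -> dotv (xi *m hess (Lagrangian z M) z) eta = 0) ->
    xi = 0.

Definition nondegenerate (z : 'rV[R]_N) : Prop :=
  exists M, Tstat_with z M /\ ND1 z /\ ND2 z M /\ ND3 z M /\ ND4 z M.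

Definition degenerate (z : 'rV[R]_N) : Prop := T_stationary z /\ ~ nondegenerate z.

End MPOC.

(** The relaxation (R) in the variables z = (x, y) in R^(n+n):
    x = lsubmx z, y = rsubmx z. *)
Section Relaxation.
Variable R : realType.
Variables n s : nat.
Variable f : 'rV[R]_n -> R.

Definition relax_g (j : 'I_n.+1) (z : 'rV[R]_(n + n)) : R :=
  match unlift ord0 j with
  | None => \sum_(i < n) rsubmx z 0 i - (n - s)%:R
  | Some i => 1 - rsubmx z 0 i
  end.

Definition relaxation : mpoc R (n + n) :=
  @MPOC R (n + n) 0 n.+1 n
    (fun z => f (lsubmx z))
    (fun _ _ => 0)
    relax_g
    (fun m z => lsubmx z 0 m)
    (fun m z => rsubmx z 0 m).
End Relaxation.

(* Main.v *)
Require Import Defs.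
From HB Require Import structures.
From mathcomp Require Import all_boot all_order all_algebra.
From mathcomp Require Import all_classical all_reals all_analysis.
From mathcomp Require Import lra.
Import Order.TTheory GRing.Theory Num.Theory.
Import numFieldNormedType.Exports.
Local Open Scope ring_scope.
Set Implicit Arguments. Unset Strict Implicit.

Section Gen.
Variables (R : realType) (N : nat).
Implicit Types (phi : 'rV[R]_N -> R) (v w u : 'rV[R]_N).

Definition affdir phi v (c : R) :=
  forall w h, phi (w + h *: v) = phi w + h * c.

Lemma derive_affdir phi v c w : affdir phi v c -> derive phi w v = c.
Proof.
move=> H; rewrite /derive; apply: cvg_lim; first exact: norm_hausdorff.
apply: cvg_near_cst.
near=> h.
have hn0 : h != 0 by near: h; exact: nbhs_dnbhs_neq.
rewrite /= [h *: v + w]addrC H addrC addKr -[h^-1 *: _]/(h^-1 * _) mulrA mulVf ?mul1r //.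
Unshelve. all: end_near.
Qed.

Lemma affdir_cst (k : R) v : affdir (fun _ => k) v 0.
Proof. by move=> w h; rewrite mulr0 addr0. Qed.

Lemma affdir_sub p q v a b : affdir p v a -> affdir q v b ->
  affdir (fun w => p w - q w) v (a - b).
Proof. by move=> Hp Hq w h; rewrite Hp Hq mulrBr; lra. Qed.

Lemma affdir_add p q v a b : affdir p v a -> affdir q v b ->
  affdir (fun w => p w + q w) v (a + b).
Proof. by move=> Hp Hq w h; rewrite Hp Hq mulrDr; lra. Qed.

Lemma affdir_scale p v a k : affdir p v a -> affdir (fun w => k * p w) v (k * a).
Proof. by move=> Hp w h; rewrite Hp mulrDr mulrCA. Qed.

Lemma affdir_sum (I : finType) (P : pred I) (F : I -> 'rV[R]_N -> R) c v :
  (forall i, P i -> affdir (F i) v (c i)) ->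
  affdir (fun w => \sum_(i | P i) F i w) v (\sum_(i | P i) c i).
Proof.
move=> H w h; rewrite (eq_bigr (fun i => F i w + h * c i)); last by move=> i Pi; rewrite H.
by rewrite big_split /= mulr_sumr.
Qed.

Lemma dotvDr u v w : dotv u (v + w) = dotv u v + dotv u w.
Proof. by rewrite /dotv -big_split; apply: eq_bigr => k _; rewrite mxE mulrDr. Qed.

Lemma dotvZr u v (h : R) : dotv u (h *: v) = h * dotv u v.
Proof. by rewrite /dotv mulr_sumr; apply: eq_bigr => k _; rewrite mxE mulrCA. Qed.

Lemma evecE (p q : 'I_N) : evec R p 0 q = (p == q)%:R.
Proof. by rewrite /evec mxE eqxx eq_sym. Qed.

Lemma dotv_evecr u (p : 'I_N) : dotv u (evec R p) = u 0 p.
Proof.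
rewrite /dotv (bigD1 p) //= evecE eqxx mulr1 big1 ?addr0 // => k kp.
by rewrite evecE eq_sym (negbTE kp) mulr0.
Qed.

Lemma dotv_evecl u (p : 'I_N) : dotv (evec R p) u = u 0 p.
Proof.
rewrite /dotv (bigD1 p) //= evecE eqxx mul1r big1 ?addr0 // => k kp.
by rewrite evecE eq_sym (negbTE kp) mul0r.
Qed.

Lemma affdir_affine phi u b v : (forall w, phi w = dotv u w + b) ->
  affdir phi v (dotv u v).
Proof. by move=> H w h; rewrite !H dotvDr dotvZr; lra. Qed.

Lemma grad_affine phi u b z : (forall w, phi w = dotv u w + b) -> grad phi z = u.
Proof.
move=> H; apply/rowP => j; rewrite mxE /partial.
erewrite derive_affdir; last exact: (affdir_affine _ H).
by rewrite dotv_evecr.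
Qed.

Lemma dotv0l w : dotv 0 w = 0.
Proof. by rewrite /dotv big1 // => k _; rewrite mxE mul0r. Qed.

Lemma dotv_sumr (I : finType) (P : pred I) (F : I -> 'rV[R]_N) w :
  dotv (\sum_(i | P i) F i) w = \sum_(i | P i) dotv (F i) w.
Proof.
rewrite /dotv exchange_big /=; apply: eq_bigr => k _.
by rewrite summxE mulr_suml.
Qed.

Lemma dotvNl u w : dotv (- u) w = - dotv u w.
Proof. by rewrite /dotv -sumrN; apply: eq_bigr => k _; rewrite mxE mulNr. Qed.

End Gen.

Section Rel.
Variables (R : realType) (n s : nat) (f : 'rV[R]_n -> R).
Local Notation P := (relaxation s f).
Local Notation rs i := (rshift n i).
Local Notation ls i := (lshift n i).

Lemma g0E w : @gc _ _ P ord0 w = dotv (\sum_(i < n) evec R (rs i)) w + - (n - s)%:R.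
Proof.
rewrite /= /relax_g unlift_none dotv_sumr; congr (_ - _).
by apply: eq_bigr => i _; rewrite dotv_evecl mxE.
Qed.

Lemma gSE i w : @gc _ _ P (lift ord0 i) w = dotv (- evec R (rs i)) w + 1.
Proof. by rewrite /= /relax_g liftK dotvNl dotv_evecl mxE addrC. Qed.

Lemma F1E m w : @F1 _ _ P m w = dotv (evec R (ls m)) w + 0.
Proof. by rewrite /= dotv_evecl mxE addr0. Qed.

Lemma F2E m w : @F2 _ _ P m w = dotv (evec R (rs m)) w + 0.
Proof. by rewrite /= dotv_evecl mxE addr0. Qed.

Lemma grad_g0 z : grad (@gc _ _ P ord0) z = \sum_(i < n) evec R (rs i).
Proof. exact: grad_affine g0E. Qed.
Lemma grad_gS i z : grad (@gc _ _ P (lift ord0 i)) z = - evec R (rs i).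
Proof. exact: grad_affine (gSE i). Qed.
Lemma grad_F1 m z : grad (@F1 _ _ P m) z = evec R (ls m).
Proof. exact: grad_affine (F1E m). Qed.
Lemma grad_F2 m z : grad (@F2 _ _ P m) z = evec R (rs m).
Proof. exact: grad_affine (F2E m). Qed.

Lemma affdir_obj i : affdir (obj P) (evec R (rs i)) 0.
Proof.
move=> w h; rewrite mulr0 addr0 /=; congr f; apply/rowP => k.
by rewrite !mxE eq_lrshift andbF mulr0 addr0.
Qed.

Lemma grad_obj_r z i : grad (obj P) z 0 (rs i) = 0.
Proof. by rewrite mxE /partial (derive_affdir _ (affdir_obj i)). Qed.


Lemma sum_evec_r (Q : pred 'I_n) (a : 'I_n -> R) i :
  (\sum_(m | Q m) a m *: evec R (rs m)) 0 (rs i) = if Q i then a i else 0.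
Proof.
rewrite summxE; case: ifP => Qi.
  rewrite (bigD1 i) //= mxE evecE eqxx mulr1 big1 ?addr0 // => m /andP [_ mi].
  by rewrite mxE evecE eq_shift (negbTE mi) mulr0.
by rewrite big1 // => m Qm; rewrite mxE evecE eq_shift; case: eqP => [mi|_]; [subst m; rewrite Qm in Qi | rewrite mulr0].
Qed.

Lemma sum1_evec i : (\sum_(m < n) evec R (rs m)) 0 (rs i) = 1.
Proof.
rewrite (eq_bigr (fun m => 1 *: evec R (rs m))) => [|m _]; last by rewrite scale1r.
by rewrite sum_evec_r.
Qed.

Lemma sum_evec_lr (Q : pred 'I_n) (a : 'I_n -> R) i :
  (\sum_(m | Q m) a m *: evec R (ls m)) 0 (rs i) = 0.
Proof. by rewrite summxE big1 // => m _; rewrite mxE evecE eq_lrshift mulr0. Qed.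

Lemma sumF1 (Q : pred 'I_n) (a : 'I_n -> R) z :
  \sum_(m | Q m) a m *: grad (@F1 _ _ P m) z = \sum_(m | Q m) a m *: evec R (ls m).
Proof. by apply: eq_bigr => m _; rewrite grad_F1. Qed.

Lemma sumF2 (Q : pred 'I_n) (a : 'I_n -> R) z :
  \sum_(m | Q m) a m *: grad (@F2 _ _ P m) z = \sum_(m | Q m) a m *: evec R (rs m).
Proof. by apply: eq_bigr => m _; rewrite grad_F2. Qed.

Lemma sumF12 (Q : pred 'I_n) (a b : 'I_n -> R) z :
  \sum_(m | Q m) (a m *: grad (@F1 _ _ P m) z + b m *: grad (@F2 _ _ P m) z) =
  \sum_(m | Q m) a m *: evec R (ls m) + \sum_(m | Q m) b m *: evec R (rs m).
Proof. by rewrite big_split /= sumF1 sumF2. Qed.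

Lemma sumG (Q : pred 'I_n.+1) (a : 'I_n.+1 -> R) z :
  \sum_(j | Q j) a j *: grad (@gc _ _ P j) z =
  (if Q ord0 then a ord0 *: \sum_(i < n) evec R (rs i) else 0)
  + \sum_(i | Q (lift ord0 i)) (- a (lift ord0 i)) *: evec R (rs i).
Proof.
rewrite big_mkcond big_ord_recl /= grad_g0; congr (_ + _).
rewrite [RHS]big_mkcond; apply: eq_bigr => i _.
by rewrite grad_gS scalerN scaleNr.
Qed.

Lemma hc_sum0 (a : 'I_(np P) -> R) z :
  \sum_i a i *: grad (@hc _ _ P i) z = 0.
Proof. by rewrite big_ord0. Qed.

Lemma ycomp z (M : mult P) (i : 'I_n) : Tstat_with z M ->
  (if J0 z (ord0 : 'I_(nq P)) then mu M ord0 else 0)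
  - (if J0 z (lift ord0 i : 'I_(nq P)) then mu M (lift ord0 i) else 0)
  + (if a10 (P:=P) z i then sig2 M i else 0) + (if a00 (P:=P) z i then rho2 M i else 0) = 0.
Proof.
move=> [_ [H _]]; move/(congr1 (fun A : 'rV[R]_(n + n) => A 0 (rs i))): H.
rewrite grad_obj_r hc_sum0 sumG sumF1 sumF2 sumF12.
rewrite !mxE !sum_evec_r !sum_evec_lr.
case: (J0 (P:=P) z ord0); rewrite ?mxE ?sum1_evec ?mulr1;
case: (J0 (P:=P) z (lift ord0 i)); case: (a10 (P:=P) z i); case: (a00 (P:=P) z i);
move=> H; lra.
Qed.

Lemma g0V z : @gc _ _ P ord0 z = \sum_(i < n) z 0 (rs i) - (n - s)%:R.
Proof. by rewrite /= /relax_g unlift_none; congr (_ - _); apply: eq_bigr => i _; rewrite mxE. Qed.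
Lemma gSV i z : @gc _ _ P (lift ord0 i) z = 1 - z 0 (rs i).
Proof. by rewrite /= /relax_g liftK mxE. Qed.
Lemma F1V m z : @F1 _ _ P m z = z 0 (ls m).
Proof. by rewrite /= mxE. Qed.
Lemma F2V m z : @F2 _ _ P m z = z 0 (rs m).
Proof. by rewrite /= mxE. Qed.

Definition affineF (phi : 'rV[R]_(n + n) -> R) :=
  exists u b, forall w, phi w = dotv u w + b.

Lemma affdir_affineF phi v : affineF phi -> affdir phi v (dotv (grad phi 0) v).
Proof. by move=> [u [b H]]; rewrite (grad_affine 0 H); exact: affdir_affine H. Qed.

Lemma affineF_g j : affineF (@gc _ _ P j).
Proof.
case: (unliftP ord0 j) => [i ->|->]; [exists (- evec R (rs i)), 1; exact: gSE
  | exists (\sum_(i < n) evec R (rs i)), (- (n - s)%:R); exact: g0E].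
Qed.
Lemma affineF_F1 m : affineF (@F1 _ _ P m).
Proof. by exists (evec R (ls m)), 0; exact: F1E. Qed.
Lemma affineF_F2 m : affineF (@F2 _ _ P m).
Proof. by exists (evec R (rs m)), 0; exact: F2E. Qed.
Lemma affineF_h j : affineF (@hc _ _ P j).
Proof. by exists 0, 0 => w; rewrite dotv0l addr0. Qed.

Lemma affdir_L z (M : mult P) i : exists c, affdir (Lagrangian z M) (evec R (rs i)) c.
Proof.
eexists; rewrite /Lagrangian.
apply: affdir_sub; first apply: affdir_sub; first apply: affdir_sub;
  first apply: affdir_sub; first apply: affdir_sub; first exact: affdir_obj.
- by apply: affdir_sum => j _; apply: affdir_scale; apply: affdir_affineF; apply: affineF_h.
- by apply: affdir_sum => j _; apply: affdir_scale; apply: affdir_affineF; apply: affineF_g.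
- by apply: affdir_sum => j _; apply: affdir_scale; apply: affdir_affineF; apply: affineF_F1.
- by apply: affdir_sum => j _; apply: affdir_scale; apply: affdir_affineF; apply: affineF_F2.
- apply: affdir_sum => j _; apply: affdir_add; apply: affdir_scale; apply: affdir_affineF.
  + exact: affineF_F1.
  + exact: affineF_F2.
Qed.

Lemma hess_row0 z (M : mult P) i : evec R (rs i) *m hess (Lagrangian z M) z = 0.
Proof.
have [c Hc] := affdir_L z M i.
rewrite /evec -rowE; apply/rowP => k; rewrite !mxE.
have -> : partial (rs i) (Lagrangian z M) = fun _ => c.
  by apply: funext => w; rewrite /partial (derive_affdir _ Hc).
by rewrite /partial (derive_affdir _ (affdir_cst _ _)).
Qed.


Lemma sum_evec_l (Q : pred 'I_n) (a : 'I_n -> R) i :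
  (\sum_(m | Q m) a m *: evec R (ls m)) 0 (ls i) = if Q i then a i else 0.
Proof.
rewrite summxE; case: ifP => Qi.
  rewrite (bigD1 i) //= mxE evecE eqxx mulr1 big1 ?addr0 // => m /andP [_ mi].
  by rewrite mxE evecE eq_shift (negbTE mi) mulr0.
by rewrite big1 // => m Qm; rewrite mxE evecE eq_shift; case: eqP => [mi|_]; [subst m; rewrite Qm in Qi | rewrite mulr0].
Qed.

Lemma sum_evec_rl (Q : pred 'I_n) (a : 'I_n -> R) i :
  (\sum_(m | Q m) a m *: evec R (rs m)) 0 (ls i) = 0.
Proof. by rewrite summxE big1 // => m _; rewrite mxE evecE eq_shift mulr0. Qed.

Lemma sum1_evec_l i : (\sum_(m < n) evec R (rs m)) 0 (ls i) = 0.
Proof.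
rewrite (eq_bigr (fun m => 1 *: evec R (rs m))) => [|m _]; last by rewrite scale1r.
by rewrite sum_evec_rl.
Qed.

Lemma tangent_ri (z : 'rV[R]_(n + n)) (i : 'I_n) :
  0 < z 0 (rs i) < 1 -> J0 (P:=P) z ord0 = false -> tangent P z (evec R (rs i)).
Proof.
move=> /andP [y0 y1] J0f; split; first by move=> [k hk]; move: (hk : (k < 0)%N).
split.
  move=> j; case: (unliftP ord0 j) => [i' ->|->]; last by rewrite J0f.
  rewrite /J0 gSV grad_gS dotvNl dotv_evecr evecE eq_shift => /eqP H.
  case: eqP => [ii|_]; last by rewrite oppr0.
  by subst i'; move: H y1; lra.
split.
  by move=> m _; rewrite grad_F1 dotv_evecr evecE eq_shift.
move=> m Hm; rewrite grad_F2 dotv_evecr evecE eq_shift.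
case: eqP => [mi|_] //; subst m.
by move: Hm y0; rewrite /a10 /a00 !F2V; case/orP => /andP [_ /eqP ->]; rewrite ltxx.
Qed.

End Rel.

Unset Implicit Arguments.

Theorem mainTheorem13 (R : realType) (n s : nat) (f : 'rV[R]_n -> R) :
  (s < n)%N -> C2 f ->
  forall z : 'rV[R]_(n + n),
    T_stationary (relaxation s f) z -> degenerate (relaxation s f) z.
Proof.
move=> sn Hf z HT; split => //.
case=> M [HTM [HND1 [HND2 [HND3 HND4]]]].
have [[_ [Hg HF]] _] := HTM.
have y0 : forall i : 'I_n, 0 <= z 0 (rshift n i).
  by move=> i; have [_] := HF i; rewrite F2V.
have y1 : forall i : 'I_n, z 0 (rshift n i) <= 1.
  by move=> i; have := Hg (lift ord0 i); rewrite gSV; lra.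
have ysum : (n - s)%:R <= \sum_(i < n) z 0 (rshift n i).
  by have := Hg ord0; rewrite g0V; lra.
have nspos : (0:R) < (n - s)%:R by rewrite ltr0n subn_gt0.
have [[i /andP [yi0 yi1]] | noA] := pselect (exists i : 'I_n, 0 < z 0 (rshift n i) < 1).
  have YC := ycomp i HTM.
  have J0S : J0 (P:=relaxation s f) z (lift ord0 i) = false.
    by rewrite /J0 gSV; apply/eqP; lra.
  have a10f : a10 (P:=relaxation s f) z i = false by rewrite /a10 F2V (gt_eqF yi0) andbF.
  have a00f : a00 (P:=relaxation s f) z i = false by rewrite /a00 F2V (gt_eqF yi0) andbF.
  rewrite J0S a10f a00f in YC.
  case J0o: (J0 (P:=relaxation s f) z ord0) YC => YC.
    by have := HND2 _ J0o; lra.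
  have := HND4 _ (@tangent_ri R n s f z i (introT andP (conj yi0 yi1)) J0o).
  have Hrow : forall eta, tangent (relaxation s f) z eta ->
     dotv (evec R (rshift n i) *m hess (Lagrangian z M) z) eta = 0.
    by move=> eta _; rewrite hess_row0 dotv0l.
  move/(_ Hrow)/(congr1 (fun A : 'rV[R]_(n + n) => A 0 (rshift n i))).
  by rewrite evecE eqxx mxE => /eqP; rewrite oner_eq0.
have yb : forall i : 'I_n, z 0 (rshift n i) = 0 \/ z 0 (rshift n i) = 1.
  move=> i; have := y0 i; have := y1 i; rewrite !le_eqVlt.
  case/orP => [/eqP -> _|lt1]; first by right.
  case/orP => [/eqP <-|gt0]; first by left.
  by exfalso; apply: noA; exists i; rewrite gt0 lt1.
case J0o: (J0 (P:=relaxation s f) z ord0).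
  have := HND1 (fun _ => 0) (fun _ => 1) (fun _ => 0) (fun _ => -1).
  case.
    rewrite hc_sum0 sumG sumF1 sumF2 J0o; apply/rowP => k.
    case: (split_ordP k) => j ->; rewrite !mxE.
      by rewrite sum1_evec_l sum_evec_rl !sum_evec_l sum_evec_rl; case: ifP => _; rewrite ?mulr0 ?mul0r; lra.
    rewrite sum1_evec !sum_evec_r !sum_evec_lr.
    rewrite /J0 gSV /a10 /a00 !F2V.
    by case: (yb j) => ->; rewrite ?subr0 ?subrr ?eqxx ?andbT ?oner_eq0 ?andbF ?orNb /=; lra.
  by move=> _ [Hb _]; have := Hb ord0 J0o => /eqP; rewrite oner_eq0.
have [[i yi]|noB] := pselect (exists i : 'I_n, z 0 (rshift n i) = 1).
  have YC := ycomp i HTM.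
  have J0S : J0 (P:=relaxation s f) z (lift ord0 i) by rewrite /J0 gSV yi subrr.
  have a10f : a10 (P:=relaxation s f) z i = false by rewrite /a10 F2V yi oner_eq0 andbF.
  have a00f : a00 (P:=relaxation s f) z i = false by rewrite /a00 F2V yi oner_eq0 andbF.
  rewrite J0S a10f a00f J0o in YC.
  by have := HND2 _ J0S; lra.
have : \sum_(i < n) z 0 (rshift n i) = 0.
  rewrite big1 // => i _; case: (yb i) => // yi; exfalso; apply: noB; by exists i.
lra.
Qed.
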